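(* Let $G$ be an undirected embedded planar graph of maximum degree $4$ and $H$ a demand graph on $V(G)$ whose edges form a matching, such that every $v$ with $\deg_H(v)=1$ has $\deg_G(v)\le3$. Let $G''$ be obtained from $G$ as follows: every node $v$ with $\deg_H(v)=0$ and $\deg_G(v)=4$, with incident edges $e_1,e_2,e_3,e_4$ in clockwise order, is replaced by a $4$-cycle $x_1x_2x_3x_4x_1$ where $e_i$ is attached to $x_i$; every node $v$ with $\deg_H(v)=1$ and $\deg_G(v)=3$ keeps its role as terminal, each of its three incident edges is subdivided by a new node, and a triangle is added on the three new nodes; all other nodes are left unchanged. Then $H$ has an integral uncrossed flow in $G$ (one path per demand, pairwise edge-disjoint and pairwise uncrossed) if and only if $H$ has a totally node-disjoint flow in $G''$ (one path per demand, the paths pairwise node-disjoint, including endpoints).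
   Context: All capacities and demands equal $1$. Two paths $P,Q$ of the embedded graph cross if there is a maximal common subpath $Z$ (possibly a single node) containing no endpoint of $P$ or $Q$ such that, writing $P=P_1,e,Z,e',P_2$ and $Q=Q_1,g,Z,g',Q_2$, the edges $e,g,e',g'$ alternate between $P$ and $Q$ in the clockwise order around $Z$; otherwise they are uncrossed. *)

(* Defs.v *)
From HB Require Import structures.
From mathcomp Require Import all_boot fingroup perm.
Set Implicit Arguments. Unset Strict Implicit. Unset Printing Implicit Defensive.

Section Embedded.
(* V : nodes, D : darts (half-edges).  tl d = node at which dart d sits,
   inv d = other half of the same edge, rot d = next dart around tl d in
   clockwise order. *)
Variables (V D : finType) (tl : D -> V) (inv rot : {perm D}).

Definition hd (d : D) : V := tl (inv d).
Definition darts_at (v : V) : {set D} := [set d | tl d == v].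
Definition degG (v : V) : nat := #|darts_at v|.

Definition rotation_system : Prop :=
  [/\ forall d, inv (inv d) = d,
      forall d, tl (inv d) != tl d,
      forall d, tl (rot d) = tl d
    & forall d d', tl d = tl d' -> fconnect rot d d'].

Definition face (d : D) : D := rot (inv d).
Definition comp_rel : rel D :=
  fun d d' => [|| d' == inv d, d' == rot d | d == rot d'].

(* Planarity: Euler's formula V - E + F = 2 on every connected component
   (genus 0); isolated nodes carry no darts and are planar trivially. *)
Definition planar_emb : Prop :=
  #|[set tl d | d in [set: D]]| + fcard face [set: D]
  = #|D| %/ 2 + 2 * n_comp comp_rel [set: D].

Definition gpath (s t : V) (p : seq D) : bool :=
  if p is d :: p' then
    [&& tl d == s, path (fun x y => hd x == tl y) d p',
        hd (last d p') == t & uniq (s :: map hd p)]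
  else false.

Definition edisj (p q : seq D) : bool :=
  all (fun d => (d \notin q) && (inv d \notin q)) p.

(* darts at the node of d strictly after d and strictly before d' in
   clockwise order (all other darts at the node when d' = d) *)
Definition between (d d' : D) : seq D :=
  traject rot (rot d) (findex rot (rot d) d').

(* The clockwise cyclic order of the darts around the subpath Z (contracted
   to a point).  Z is given by its (forward) darts z; d0 is a dart at its
   first node (used when Z is a single node). *)
Definition around (z : seq D) (d0 : D) : seq D :=
  match z with
  | [::] => orbit rot d0
  | f0 :: _ =>
      let r := size z in
      let fw k := nth f0 z k in
      let bw k := inv (nth f0 z k.-1) in
      between (fw 0) (fw 0)
      ++ flatten [seq between (bw k) (fw k) | k <- iota 1 r.-1]
      ++ between (bw r) (bw r)
      ++ flatten [seq between (fw k) (bw k) | k <- rev (iota 1 r.-1)]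
  end.

Definition sep (i j k : nat) : bool := (minn i j < k) && (k < maxn i j).
Definition alternate (s : seq D) (x1 y1 x2 y2 : D) : bool :=
  [&& uniq [:: x1; y1; x2; y2], all (fun x => x \in s) [:: x1; y1; x2; y2]
    & sep (index x1 s) (index x2 s) (index y1 s)
      != sep (index x1 s) (index x2 s) (index y2 s)].

(* P = P1,e,Z,e',P2 and Q = Q1,g,Z,g',Q2 with Z (nodes i..j of P, a..b of Q)
   a maximal common subpath containing no endpoint, traversed in the same
   direction, and e,g,e',g' alternating around Z. *)
Definition crossing_dir (p q : seq D) : Prop :=
  exists (x0 : D) (i j a b : nat),
    [/\ 0 < i <= j, j < size p, 0 < a <= b, b < size q & j - i = b - a] /\
    tl (nth x0 p i) = tl (nth x0 q a) /\
    (forall k, k < j - i -> nth x0 p (i + k) = nth x0 q (a + k)) /\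
    [/\ nth x0 p i.-1 != nth x0 q a.-1, nth x0 p j != nth x0 q b,
        nth x0 p i.-1 != inv (nth x0 q a) & nth x0 p i != inv (nth x0 q a.-1)]
    /\
    alternate (around (take (j - i) (drop i p)) (nth x0 p i))
      (inv (nth x0 p i.-1)) (inv (nth x0 q a.-1)) (nth x0 p j) (nth x0 q b).

Definition revp (q : seq D) : seq D := rev (map inv q).

Definition cross (p q : seq D) : Prop :=
  crossing_dir p q \/ crossing_dir p (revp q).

Definition matching (h : rel V) : Prop :=
  [/\ forall u v, h u v = h v u, forall u, ~~ h u u
    & forall u v w, h u v -> h u w -> v = w].
Definition degH (h : rel V) (v : V) : nat := #|[set w | h v w]|.

Definition uncrossed_flow (h : rel V) : Prop :=
  exists F : V -> V -> seq D,
    (forall s t, h s t -> gpath s t (F s t)) /\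
    (forall s t s' t', h s t -> h s' t' -> s' != s -> s' != t ->
       edisj (F s t) (F s' t') /\ ~ cross (F s t) (F s' t')).

(* The graph G'' : nodes inl v for unreplaced nodes v, inr d for the new
   node associated with dart d at a replaced/modified node. *)
Definition special4 (h : rel V) (v : V) : bool := (degH h v == 0) && (degG v == 4).
Definition special3 (h : rel V) (v : V) : bool := (degH h v == 1) && (degG v == 3).

Definition vert2 (h : rel V) (x : V + D) : bool :=
  match x with
  | inl v => ~~ special4 h v
  | inr d => special4 h (tl d) || special3 h (tl d)
  end.

Definition att (h : rel V) (d : D) : V + D :=
  if special4 h (tl d) || special3 h (tl d) then inr d else inl (tl d).

Definition adj0 (h : rel V) (x y : V + D) : bool :=
  [|| [exists d, (x == att h d) && (y == att h (inv d))],
      [exists d, [&& special4 h (tl d), x == inr d & y == inr (rot d)]],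
      [exists d, [&& special3 h (tl d), x == inl (tl d) & y == inr d]]
    | [exists d, [exists d', [&& special3 h (tl d), tl d' == tl d, d != d',
                              x == inr d & y == inr d']]]].

Definition adj2 (h : rel V) : rel (V + D) := fun x y => adj0 h x y || adj0 h y x.

Definition npath2 (h : rel V) (s t : V) (p : seq (V + D)) : bool :=
  if p is x :: p' then
    [&& x == inl s, path (adj2 h) x p', last x p' == inl t, uniq p
      & all (vert2 h) p]
  else false.

Definition ndisj (p q : seq (V + D)) : bool := all (fun x => x \notin q) p.

Definition node_disjoint_flow2 (h : rel V) : Prop :=
  exists F : V -> V -> seq (V + D),
    (forall s t, h s t -> npath2 h s t (F s t)) /\
    (forall s t s' t', h s t -> h s' t' -> s' != s -> s' != t ->
       ndisj (F s t) (F s' t')).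

End Embedded.

(* Main.v *)
Require Import Defs.
From mathcomp Require Import all_boot fingroup perm zify.
From Stdlib Require Import ClassicalEpsilon.
Set Implicit Arguments. Unset Strict Implicit. Unset Printing Implicit Defensive.

Section Proof5.
Variables (V D : finType) (tl : D -> V) (inv rot : {perm D}) (h : rel V).
Hypothesis rs : rotation_system tl inv rot.
Hypothesis deg4 : forall v, degG tl v <= 4.
Hypothesis hm : matching h.
Hypothesis hdeg : forall v, degH h v = 1 -> degG tl v <= 3.

Local Notation hdd := (hd tl inv).
Local Notation dG := (degG tl).
Local Notation sp4 := (special4 tl h).
Local Notation sp3 := (special3 tl h).

Lemma invK d : inv (inv d) = d.
Proof. by case: rs. Qed.
Lemma tl_inv d : tl (inv d) != tl d.
Proof. by case: rs. Qed.
Lemma tl_rot d : tl (rot d) = tl d.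
Proof. by case: rs. Qed.
Lemma tl_iter n d : tl (iter n rot d) = tl d.
Proof. by elim: n => //= n IH; rewrite tl_rot. Qed.
Lemma fconP d e : fconnect rot d e = (tl e == tl d).
Proof.
apply/idP/eqP.
  by move/iter_findex => <-; rewrite tl_iter.
by case: rs => _ _ _ H /esym /H.
Qed.
Lemma orbit_tl d e : (e \in orbit rot d) = (tl e == tl d).
Proof. by rewrite -fconnect_orbit fconP. Qed.

Lemma size_orbit d : size (orbit rot d) = dG (tl d).
Proof.
rewrite /orbit size_traject /fingraph.order /degG /darts_at.
apply: eq_card => e; rewrite inE -(fconP d e) //.
Qed.

Lemma degG_uniq v (l : seq D) : uniq l -> all (fun e => tl e == v) l -> size l <= dG v.
Proof.
move=> ul al; apply/card_geqP; exists l; split => // e el.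
by rewrite inE; move/allP: al => /(_ e el).
Qed.

Definition r2 d := rot (rot d).
Definition r3 d := rot (rot (rot d)).

Lemma orbit4 d : dG (tl d) = 4 -> orbit rot d = [:: d; rot d; r2 d; r3 d].
Proof.
move=> H4; have := size_orbit d; rewrite H4 /orbit size_traject => ->. by [].
Qed.

Lemma rot4 d : dG (tl d) = 4 -> rot (r3 d) = d.
Proof.
move=> H4; have := iter_order (@perm_inj _ rot) d.
have -> : fingraph.order rot d = 4 by rewrite -H4 -size_orbit /orbit size_traject.
by [].
Qed.

Lemma uniq4 d : dG (tl d) = 4 -> uniq [:: d; rot d; r2 d; r3 d].
Proof. by move=> H4; rewrite -orbit4 // orbit_uniq. Qed.

Lemma alt_gen (a b c e x1 y1 y2 : D) :
  uniq [:: a; b; c; e] -> x1 \in [:: a; b; c; e] -> y1 \in [:: a; b; c; e] ->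
  y2 \in [:: a; b; c; e] -> uniq [:: x1; y1; a; y2] ->
  alternate [:: a; b; c; e] x1 y1 a y2 = (x1 == c).
Proof.
move=> u; have := u => /and4P []; rewrite !inE !negb_or => /and3P[ab ac ae] /andP[bc be] ce _.
rewrite /alternate.
move=> /or4P [] /eqP -> /or4P [] /eqP -> /or4P [] /eqP -> //=;
rewrite ?inE ?eqxx ?(negbTE ab) ?(negbTE ac) ?(negbTE ae) ?(negbTE bc) ?(negbTE be) ?(negbTE ce) ?(eq_sym b a) ?(eq_sym c a) ?(eq_sym e a) ?(eq_sym c b) ?(eq_sym e b) ?(eq_sym e c) ?(negbTE ab) ?(negbTE ac) ?(negbTE ae) ?(negbTE bc) ?(negbTE be) ?(negbTE ce) //= ?orbT ?andbF //.
Qed.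

Lemma alt4 x1 y1 x2 y2 : dG (tl x2) = 4 -> uniq [:: x1; y1; x2; y2] ->
  all (fun e => tl e == tl x2) [:: x1; y1; x2; y2] ->
  alternate (orbit rot x2) x1 y1 x2 y2 = (x1 == r2 x2).
Proof.
move=> H4 u /and4P [t1 t2 _ /andP [t3 _]].
rewrite orbit4 //; apply: alt_gen => //; first exact: uniq4.
- by rewrite -orbit4 // orbit_tl.
- by rewrite -orbit4 // orbit_tl.
- by rewrite -orbit4 // orbit_tl.
Qed.

Lemma in4 d e : dG (tl d) = 4 -> tl e = tl d -> e \in [:: d; rot d; r2 d; r3 d].
Proof. by move=> H4 te; rewrite -orbit4 // orbit_tl te. Qed.

Lemma rot_inj : injective rot. Proof. exact: perm_inj. Qed.

Lemma degH_le1 v : degH h v <= 1.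
Proof.
case: hm => _ _ hu; apply/card_le1_eqP => x y; rewrite !inE => hx hy.
by rewrite (hu _ _ _ hx hy).
Qed.
Lemma degH_1 s t : h s t -> degH h s = 1.
Proof.
move=> hst; apply/eqP; rewrite eqn_leq degH_le1 /=.
by rewrite /degH card_gt0; apply/set0Pn; exists t; rewrite inE.
Qed.
Lemma hsym s t : h s t -> h t s.
Proof. by case: hm => H _ _; rewrite H. Qed.
Lemma hneq s t : h s t -> s != t.
Proof. by case: hm => _ H _ hst; apply/eqP => e; move: hst; rewrite e (negbTE (H t)). Qed.

Lemma sp4_deg v : sp4 v -> dG v = 4.
Proof. by case/andP => _ /eqP. Qed.
Lemma sp4_degH v : sp4 v -> degH h v = 0.
Proof. by case/andP => /eqP. Qed.
Lemma sp43 v : sp4 v -> ~~ sp3 v.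
Proof. by case/andP => /eqP e _; rewrite /special3 e. Qed.
Lemma term_nsp4 s t : h s t -> ~~ sp4 s.
Proof. by move/degH_1 => e; rewrite /special4 e. Qed.

Local Notation att := (att tl h).
Local Notation adj2 := (adj2 tl inv rot h).
Local Notation vert2 := (vert2 tl h).

Definition proj (x : V + D) : V := match x with inl v => v | inr d => tl d end.
Lemma proj_att d : proj (att d) = tl d.
Proof. by rewrite /Defs.att; case: ifP. Qed.

Lemma adjC x y : adj2 x y = adj2 y x.
Proof. by rewrite /Defs.adj2 orbC. Qed.
Lemma adj_ext d : adj2 (att d) (att (inv d)).
Proof. apply/orP; left; apply/or4P; apply: Or41; apply/existsP; exists d; by rewrite !eqxx. Qed.
Lemma adj_rot d : sp4 (tl d) -> adj2 (inr d) (inr (rot d)).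
Proof. move=> H; apply/orP; left; apply/or4P; apply: Or42; apply/existsP; exists d; by rewrite H !eqxx. Qed.
Lemma adj_sp3l d : sp3 (tl d) -> adj2 (inl (tl d)) (inr d).
Proof. move=> H; apply/orP; left; apply/or4P; apply: Or43; apply/existsP; exists d; by rewrite H !eqxx. Qed.
Lemma adj_sp3 d d' : sp3 (tl d) -> tl d' = tl d -> d != d' -> adj2 (inr d) (inr d').
Proof.
move=> H t n; apply/orP; left; apply/or4P; apply: Or44; apply/existsP; exists d.
apply/existsP; exists d'; by rewrite H t n !eqxx.
Qed.

Lemma att_sp d : sp4 (tl d) || sp3 (tl d) -> att d = inr d.
Proof. by rewrite /Defs.att => ->. Qed.
Lemma att_nsp d : ~~ (sp4 (tl d) || sp3 (tl d)) -> att d = inl (tl d).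
Proof. by rewrite /Defs.att => /negbTE ->. Qed.


Definition route (a b : D) : seq (V + D) :=
  if (b == rot a) || (a == rot b) then [:: inr a; inr b] else [:: inr a; inr (rot a); inr b].

Definition blk (v : V) (i o : option D) : seq (V + D) :=
  if sp4 v then (match i, o with Some a, Some b => route a b | _, _ => [:: inl v] end)
  else if sp3 v then (match i, o with
   | Some a, Some b => [:: inr a; inr b]
   | None, Some b => [:: inl v; inr b]
   | Some a, None => [:: inr a; inl v]
   | None, None => [:: inl v] end)
  else [:: inl v].

Definition darts (i o : option D) : seq D :=
  (if i is Some a then [:: a] else [::]) ++ (if o is Some b then [:: b] else [::]).

Definition okv v i o := [&& all (fun d => tl d == v) (darts i o), uniq (darts i o),
   darts i o != [::] & (sp4 v ==> (i != None) && (o != None))].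

Lemma route_r2 a b : sp4 (tl a) -> tl b = tl a -> a != b -> ~~ ((b == rot a) || (a == rot b)) -> b = r2 a.
Proof.
move=> s4 tb; have H4 := sp4_deg s4.
have := in4 H4 tb; rewrite !inE => /or4P [] /eqP -> //.
- by rewrite eqxx.
- by rewrite eqxx.
- by rewrite rot4 // eqxx orbT.
Qed.

Definition blkset (v : V) (i o : option D) : seq (V + D) :=
  inl v :: [seq inr d | d <- darts i o ++ (if i is Some a then [:: rot a] else [::])].

Lemma blk_sub v i o x : x \in blk v i o -> x \in blkset v i o.
Proof.
rewrite /blk /blkset /route.
case: i => [a|]; case: o => [b|]; repeat case: ifP => _;
move=> /= H; rewrite !inE; rewrite ?inE in H;
repeat (case/orP: H => H; [move/eqP: H => ->; by rewrite !eqxx ?orbT|]);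
move/eqP: H => ->; by rewrite !eqxx ?orbT.
Qed.

Lemma blk_proj v i o x : okv v i o -> x \in blk v i o -> proj x = v.
Proof.
case/and4P => al _ _ _ /blk_sub; rewrite /blkset inE => /orP [/eqP -> //|].
case/mapP => d dm ->; rewrite /=.
move: dm; rewrite mem_cat => /orP [dm|].
  by move/allP: al => /(_ d dm) /eqP.
case: i al => [a|] // al; rewrite inE => /eqP ->; rewrite tl_rot.
by move: al => /= /andP [/eqP].
Qed.


Lemma okv_some v a b : okv v (Some a) (Some b) -> [/\ tl a = v, tl b = v & a != b].
Proof. by case/and4P => /= /and3P [/eqP -> /eqP -> _]; rewrite inE andbT => ->. Qed.
Lemma okv_in v a : okv v (Some a) None -> tl a = v /\ ~~ sp4 v.
Proof. case/and4P => /= /andP [/eqP -> _] _ _; rewrite /= => H; split => //; apply/negP => H4; move: H; by rewrite H4. Qed.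
Lemma okv_out v b : okv v None (Some b) -> tl b = v /\ ~~ sp4 v.
Proof. case/and4P => /= /andP [/eqP -> _] _ _; rewrite /= => H; split => //; apply/negP => H4; move: H; by rewrite H4. Qed.
Lemma okv_none v : okv v None None -> False.
Proof. by case/and4P. Qed.

Lemma sp_or4 v : sp4 v -> sp4 v || sp3 v. Proof. by move=> ->. Qed.
Lemma sp_or3 v : sp3 v -> sp4 v || sp3 v. Proof. by move=> ->; rewrite orbT. Qed.

Lemma inrE (x y : D) : (inr x == inr y :> V + D) = (x == y).
Proof. by []. Qed.
Lemma inlE (x y : V) : (inl x == inl y :> V + D) = (x == y).
Proof. by []. Qed.
Lemma inlrE (x : V) (y : D) : (inl x == inr y :> V + D) = false.
Proof. by []. Qed.
Lemma inrlE (x : V) (y : D) : (inr y == inl x :> V + D) = false.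
Proof. by []. Qed.

Lemma blk_sorted v i o : okv v i o -> sorted adj2 (blk v i o).
Proof.
case: i => [a|]; case: o => [b|] => ok; rewrite /blk.
- case/okv_some: ok => ta tb ab.
  case: ifP => s4.
    rewrite /route; case: ifP => adj.
      rewrite /= andbT; case/orP: adj => /eqP e.
        by rewrite e; apply: adj_rot; rewrite ta.
      by rewrite adjC e; apply: adj_rot; rewrite tb.
    have e : b = r2 a by apply: route_r2; rewrite ?ta ?tb ?adj.
    rewrite /= andbT adj_rot ?ta //= e; apply: adj_rot; by rewrite tl_rot ta.
  case: ifP => s3 //=; rewrite andbT; apply: adj_sp3 => //; by rewrite ?ta ?tb.
- case/okv_in: ok => ta n4; rewrite (negbTE n4); case: ifP => s3 //=.
  by rewrite andbT adjC -ta; apply: adj_sp3l; rewrite ta.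
- case/okv_out: ok => tb n4; rewrite (negbTE n4); case: ifP => s3 //=.
  by rewrite andbT -tb; apply: adj_sp3l; rewrite tb.
- by case: (okv_none ok).
Qed.

Lemma blk_head v i o : okv v i o -> head (inl v) (blk v i o) = if i is Some a then att a else inl v.
Proof.
case: i => [a|]; case: o => [b|] => ok; rewrite /blk.
- case/okv_some: ok => ta tb ab.
  case: ifP => s4; first by rewrite /route; case: ifP => _ /=; rewrite att_sp // ta sp_or4.
  case: ifP => s3 /=; first by rewrite att_sp // ta sp_or3.
  by rewrite att_nsp ?ta ?s4 ?s3.
- case/okv_in: ok => ta n4; rewrite (negbTE n4); case: ifP => s3 /=.
    by rewrite att_sp // ta sp_or3.
  by rewrite att_nsp ?ta ?(negbTE n4) ?s3.
- case/okv_out: ok => tb n4; rewrite (negbTE n4); by case: ifP.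
- by case: (okv_none ok).
Qed.

Lemma blk_last v i o : okv v i o -> last (inl v) (blk v i o) = if o is Some b then att b else inl v.
Proof.
case: i => [a|]; case: o => [b|] => ok; rewrite /blk.
- case/okv_some: ok => ta tb ab.
  case: ifP => s4; first by rewrite /route; case: ifP => _ /=; rewrite att_sp // tb sp_or4.
  case: ifP => s3 /=; first by rewrite att_sp // tb sp_or3.
  by rewrite att_nsp ?tb ?s4 ?s3.
- case/okv_in: ok => ta n4; rewrite (negbTE n4); by case: ifP.
- case/okv_out: ok => tb n4; rewrite (negbTE n4); case: ifP => s3 /=.
    by rewrite att_sp // tb sp_or3.
  by rewrite att_nsp ?tb ?(negbTE n4) ?s3.
- by case: (okv_none ok).
Qed.

Lemma blk_uniq v i o : okv v i o -> uniq (blk v i o).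
Proof.
case: i => [a|]; case: o => [b|] => ok; rewrite /blk.
- case/okv_some: ok => ta tb ab.
  case: ifP => s4.
    rewrite /route; case: ifP => adj; first by rewrite /= inE andbT.
    have e : b = r2 a by apply: route_r2; rewrite ?ta ?tb ?adj.
    have := uniq4 (sp4_deg (v:=tl a) (etrans (congr1 sp4 ta) s4)).
    rewrite e /= !inE => /and4P [/norP [n1 /norP [n2 _]] /norP [n3 _] _ _].
    by rewrite !inrE (negbTE n1) (negbTE n2) (negbTE n3).
  by case: ifP => s3 //=; rewrite inE ab.
- case/okv_in: ok => ta n4; rewrite (negbTE n4); by case: ifP.
- case/okv_out: ok => tb n4; rewrite (negbTE n4); by case: ifP.
- by case: (okv_none ok).
Qed.

Lemma blk_vert v i o : okv v i o -> all vert2 (blk v i o).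
Proof.
case: i => [a|]; case: o => [b|] => ok; rewrite /blk.
- case/okv_some: ok => ta tb ab.
  case: ifP => s4.
    by rewrite /route; case: ifP => _ /=; rewrite ?tl_rot ta tb s4.
  by case: ifP => s3 /=; rewrite ?ta ?tb ?s3 ?s4 ?orbT.
- case/okv_in: ok => ta n4; rewrite (negbTE n4); case: ifP => s3 /=; by rewrite ?ta ?s3 ?n4 ?orbT.
- case/okv_out: ok => tb n4; rewrite (negbTE n4); case: ifP => s3 /=; by rewrite ?tb ?s3 ?n4 ?orbT.
- by case: (okv_none ok).
Qed.

Lemma blk_nil v i o : blk v i o != [::].
Proof. rewrite /blk /route; case: i => [a|]; case: o => [b|]; by repeat case: ifP. Qed.


Lemma sorted_catI (T : eqType) (r : rel T) x s1 s2 : sorted r s1 -> sorted r s2 ->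
  (s1 != [::] -> s2 != [::] -> r (last x s1) (head x s2)) -> sorted r (s1 ++ s2).
Proof.
case: s1 => [//|x1 s1] /= p1; case: s2 => [|y s2] /= p2 H; first by rewrite cats0.
by rewrite cat_path p1 /= p2 H ?andbT.
Qed.
Lemma head_catn (T : eqType) (x : T) s1 s2 : s1 != [::] -> head x (s1 ++ s2) = head x s1.
Proof. by case: s1. Qed.
Lemma last_catn (T : eqType) (x : T) s1 s2 : s2 != [::] -> last x (s1 ++ s2) = last x s2.
Proof. by rewrite last_cat; case: s2. Qed.

Fixpoint liftrest (e : D) (p : seq D) : seq (V + D) :=
  match p with
  | [::] => blk (hdd e) (Some (inv e)) None
  | d :: p' => blk (hdd e) (Some (inv e)) (Some d) ++ liftrest d p'
  end.
Definition lift (s : V) (p : seq D) : seq (V + D) :=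
  match p with [::] => [:: inl s] | d :: p' => blk s None (Some d) ++ liftrest d p' end.

Local Notation hpath := (path (fun x y => hdd x == tl y)).

Lemma liftrest_nil e p : liftrest e p != [::].
Proof. case: p => [|d p] /=; first exact: blk_nil. by rewrite -size_eq0 size_cat addn_eq0 size_eq0 (negbTE (blk_nil _ _ _)). Qed.

Lemma tl_inv_hd e : tl (inv e) = hdd e. Proof. by []. Qed.

Lemma liftrest_ok e p : hpath e p -> uniq (tl e :: hdd e :: map hdd p) -> ~~ sp4 (hdd (last e p)) ->
  [/\ (forall x, x \in liftrest e p -> proj x \in hdd e :: map hdd p),
      uniq (liftrest e p), all vert2 (liftrest e p), sorted adj2 (liftrest e p)
    & head (inl (hdd e)) (liftrest e p) = att (inv e) /\
      last (inl (hdd e)) (liftrest e p) = inl (hdd (last e p))].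
Proof.
elim: p e => [|d p IH] e /=.
  move=> _ _ n4.
  have ok : okv (hdd e) (Some (inv e)) None by rewrite /okv /= eqxx (negbTE n4).
  split; last split.
  - by move=> x /(blk_proj ok) ->; rewrite inE.
  - exact: blk_uniq.
  - exact: blk_vert.
  - exact: blk_sorted.
  - by rewrite (blk_head ok).
  - by rewrite (blk_last ok).
move=> /andP [/eqP ed hp] u n4.
have u' : uniq (tl d :: hdd d :: map hdd p) by rewrite -ed; case/andP: u.
case: (IH d hp u' n4) => Hp Hu Hv Hs [Hh Hl].
have nde : inv e != d.
  apply/eqP => ie; move: u; rewrite /= !inE -ie /hd invK eqxx /=.
  by rewrite orbT.
have ok : okv (hdd e) (Some (inv e)) (Some d).
  by rewrite /okv /= eqxx ed eqxx /= inE nde implybT.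
have nsub : hdd e \notin hdd d :: map hdd p by case/andP: u => _ /andP [].
split; last split.
- move=> x; rewrite mem_cat => /orP [/(blk_proj ok) ->|/Hp]; first by rewrite inE eqxx.
  by move=> px; rewrite in_cons px orbT.
- rewrite cat_uniq blk_uniq //= Hu andbT; apply/hasPn => x /Hp px.
  apply/negP => /(blk_proj ok) e'; by move: nsub; rewrite -e' px.
- by rewrite all_cat blk_vert.
- apply: (sorted_catI (x := inl (hdd e))) => //; first exact: blk_sorted.
  move=> _ _; rewrite (blk_last ok).
  have -> : head (inl (hdd e)) (liftrest d p) = head (inl (hdd d)) (liftrest d p).
    by case: (liftrest d p) (liftrest_nil d p).
  by rewrite Hh; exact: adj_ext.
- by rewrite head_catn ?blk_nil // (blk_head ok).
- rewrite last_catn ?liftrest_nil //.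
  have -> : last (inl (hdd e)) (liftrest d p) = last (inl (hdd d)) (liftrest d p).
    by case: (liftrest d p) (liftrest_nil d p).
  by rewrite Hl.
Qed.

Lemma npath2I s t L : L != [::] -> head (inl s) L = inl s -> sorted adj2 L ->
  last (inl s) L = inl t -> uniq L -> all vert2 L -> npath2 tl inv rot h s t L.
Proof. case: L => [//|x L] _ /= -> -> -> -> ->; by rewrite !eqxx. Qed.

Lemma lift_npath s t p : h s t -> gpath tl inv s t p -> npath2 tl inv rot h s t (lift s p).
Proof.
move=> hst; case: p => [//|d p] /= /and4P [/eqP ts hp /eqP hl u].
have n4s := term_nsp4 hst.
have n4t : ~~ sp4 (hdd (last d p)) by rewrite hl; exact: (term_nsp4 (hsym hst)).
have u' : uniq (tl d :: hdd d :: map hdd p) by rewrite ts.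
case: (liftrest_ok hp u' n4t) => Hp Hu Hv Hs [Hh Hl].
have ok : okv s None (Some d) by rewrite /okv /= ts eqxx (negbTE n4s).
apply: npath2I.
- by rewrite -size_eq0 size_cat addn_eq0 size_eq0 (negbTE (blk_nil _ _ _)).
- by rewrite head_catn ?blk_nil // (blk_head ok).
- apply: (sorted_catI (x := inl s)) => //; first exact: blk_sorted.
  move=> _ _; rewrite (blk_last ok).
  have -> : head (inl s) (liftrest d p) = head (inl (hdd d)) (liftrest d p).
    by case: (liftrest d p) (liftrest_nil d p).
  by rewrite Hh; exact: adj_ext.
- rewrite last_catn ?liftrest_nil //.
  have -> : last (inl s) (liftrest d p) = last (inl (hdd d)) (liftrest d p).
    by case: (liftrest d p) (liftrest_nil d p).
  by rewrite Hl hl.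
- rewrite cat_uniq blk_uniq //= Hu andbT; apply/hasPn => x /Hp px.
  apply/negP => /(blk_proj ok) e'; move: u; by rewrite /= -e' px.
- by rewrite all_cat blk_vert.
Qed.

Lemma liftrest_mem e p x : x \in liftrest e p ->
  (exists2 i, i < size p & x \in blk (hdd (nth e (e :: p) i)) (Some (inv (nth e (e :: p) i))) (Some (nth e p i)))
  \/ x \in blk (hdd (last e p)) (Some (inv (last e p))) None.
Proof.
elim: p e => [|d p IH] e /=; first by right.
rewrite mem_cat => /orP [xb|/IH [[i ip xi]|xl]].
- by left; exists 0.
- left; exists i.+1 => //.
  have E1 : nth e (d :: p) i = nth d (d :: p) i by apply: set_nth_default; rewrite /= ltnS ltnW.
  have E2 : nth e p i = nth d p i by apply: set_nth_default.
  by rewrite /= E1 E2.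
- by right.
Qed.


Lemma route_adj a b : dG (tl b) = 4 -> tl a = tl b -> a != b -> a != r2 b ->
  route a b = [:: inr a; inr b].
Proof.
move=> H4 ta ab a2; rewrite /route.
have := in4 H4 ta; rewrite !inE (negbTE ab) (negbTE a2) /= => /orP [] /eqP ->.
  by rewrite eqxx orbT.
by rewrite rot4 // eqxx.
Qed.

Lemma blk_sub3 v i o x : ~~ sp4 v -> x \in blk v i o ->
  (x = inl v /\ ((i == None) || (o == None) || ~~ sp3 v)) \/ (exists2 d, x = inr d & d \in darts i o).
Proof.
move=> n4; rewrite /blk (negbTE n4).
case: ifP => s3; last by rewrite inE => /eqP ->; left; rewrite orbT.
case: i => [a|]; case: o => [b|]; rewrite !inE ?orbF.
- by case/orP => /eqP ->; right; [exists a|exists b]; rewrite // !inE eqxx ?orbT.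
- by case/orP => /eqP ->; [right; exists a|left]; rewrite ?inE ?eqxx.
- by case/orP => /eqP ->; [left|right; exists b]; rewrite ?inE ?eqxx.
- by move/eqP ->; left.
Qed.

Lemma size_darts i o : size (darts i o) = (i != None) + (o != None).
Proof. by case: i; case: o. Qed.

Lemma local v iP oP iQ oQ x :
  okv v iP oP -> okv v iQ oQ ->
  uniq (darts iP oP ++ darts iQ oQ) ->
  ((iP == None) || (oP == None) -> degH h v = 1) ->
  ((iQ == None) || (oQ == None) -> degH h v = 1) ->
  ~~ (((iP == None) || (oP == None)) && ((iQ == None) || (oQ == None))) ->
  (forall aP bP aQ bQ, iP = Some aP -> oP = Some bP -> iQ = Some aQ -> oQ = Some bQ -> sp4 v ->
      ~~ alternate (orbit rot bP) aP aQ bP bQ /\ ~~ alternate (orbit rot bQ) aQ aP bQ bP) ->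
  x \in blk v iP oP -> x \in blk v iQ oQ -> False.
Proof.
move=> okP okQ u tP tQ nt alt.
have al : all (fun d => tl d == v) (darts iP oP ++ darts iQ oQ).
  by rewrite all_cat; case/and4P: okP => -> _ _ _; case/and4P: okQ => -> _ _ _.
case s4: (sp4 v).
  have H0 := sp4_degH s4.
  case: iP oP okP u tP nt alt al => [aP|]; case=> [bP|] okP; rewrite ?eqxx ?orbT;
    try by move=> _ /(_ isT); rewrite H0.
  case: iQ oQ okQ tQ => [aQ|]; case=> [bQ|] okQ; rewrite ?eqxx ?orbT;
    try by move=> /(_ isT); rewrite H0.
  move=> _ u _ _ /(_ _ _ _ _ erefl erefl erefl erefl s4) [nP nQ] al.
  move: al u; rewrite /= => /and4P [/eqP ta /eqP tb /eqP tc /andP [/eqP te _]].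
  rewrite !inE !negb_or -!andbA => /and4P [n1 n2 n3 /and4P [n4 n5 n6 _]].
  have H4 : dG v = 4 by apply: sp4_deg.
  have nP' : aP != r2 bP.
    rewrite -(alt4 (y1 := aQ) (y2 := bQ)) ?tb //.
      by rewrite /= !inE !negb_or n1 n2 n3 n5 n6 (eq_sym aQ bP) n4.
    by rewrite /= ta tb tc te eqxx.
  have nQ' : aQ != r2 bQ.
    rewrite -(alt4 (y1 := aP) (y2 := bP)) ?te //.
      by rewrite /= !inE !negb_or (eq_sym aQ aP) n2 n6 (eq_sym aQ bP) n4 n3 n1 (eq_sym bQ bP) n5.
    by rewrite /= ta tb tc te eqxx.
  rewrite /blk s4 route_adj ?tb ?ta // route_adj ?te ?tc //.
  rewrite !inE => /orP [] /eqP -> /orP [] /eqP []; move=> e; subst;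
    by rewrite ?eqxx in n1 n2 n3 n4 n5 n6.
move/negbT: s4 => n4 xP xQ.
case s3: (sp3 v).
  case: (blk_sub3 n4 xP) => [[ex tx]|[d ex dP]]; case: (blk_sub3 n4 xQ) => [[ey ty]|[d' ey dQ]];
    subst x => //.
  - by move: nt; rewrite s3 !orbF in tx ty; rewrite tx ty.
  - case: ey => ed; subst d'; move: u; rewrite cat_uniq => /and3P [_ /hasPn /(_ d dQ)].
    by rewrite dP.
have Hs := degG_uniq u al; rewrite size_cat !size_darts in Hs.
have n0P : (iP != None) || (oP != None).
  by case/and4P: okP; case: (iP); case: (oP).
have n0Q : (iQ != None) || (oQ != None).
  by case/and4P: okQ; case: (iQ); case: (oQ).
have s3f : degH h v = 1 -> dG v <= 2.
  move=> e; have n3 : dG v != 3 by move: s3; rewrite /special3 e eqxx /= => /negbT.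
  by move: (hdeg e); rewrite leq_eqVlt (negbTE n3).
have d4 : dG v <= 4 := deg4 v.
have n4' : degH h v = 0 -> dG v != 4.
  by move: n4; rewrite /special4 => /nandP [/negP n|//] e; rewrite e eqxx in n.
have H01 : degH h v = 0 \/ degH h v = 1.
  by have := degH_le1 v; case: (degH h v) => [|[|]]; auto.
move: Hs nt tP tQ n0P n0Q.
case: (iP == None); case: (oP == None); case: (iQ == None); case: (oQ == None) => //= Hs _ tP tQ _ _;
  case: H01 => e; rewrite ?e in n4' s3f tP tQ;
  try (have := tP erefl; done); try (have := tQ erefl; done);
  try (have := s3f erefl; lia); try (have := n4' erefl; move/eqP; lia).
Qed.


Lemma liftrest_mem_ok e p x : hpath e p -> uniq (tl e :: hdd e :: map hdd p) -> ~~ sp4 (hdd (last e p)) ->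
  x \in liftrest e p ->
  (exists2 i, i < size p &
     x \in blk (hdd (nth e (e :: p) i)) (Some (inv (nth e (e :: p) i))) (Some (nth e p i)) /\
     okv (hdd (nth e (e :: p) i)) (Some (inv (nth e (e :: p) i))) (Some (nth e p i)))
  \/ (x \in blk (hdd (last e p)) (Some (inv (last e p))) None /\
      okv (hdd (last e p)) (Some (inv (last e p))) None).
Proof.
elim: p e => [|d p IH] e /=.
  move=> _ _ n4 xb; right; split => //.
  by rewrite /okv /= eqxx (negbTE n4).
move=> /andP [/eqP ed hp] u n4.
have u' : uniq (tl d :: hdd d :: map hdd p) by rewrite -ed; case/andP: u.
have nde : inv e != d.
  apply/eqP => ie; move: u; rewrite /= !inE -ie /hd invK eqxx /=.
  by rewrite orbT.
have ok : okv (hdd e) (Some (inv e)) (Some d).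
  by rewrite /okv /= eqxx ed eqxx /= inE nde implybT.
rewrite mem_cat => /orP [xb|/(IH d hp u' n4) [[i ip [xi oki]]|xl]].
- by left; exists 0.
- left; exists i.+1 => //.
  have E1 : nth e (d :: p) i = nth d (d :: p) i by apply: set_nth_default; rewrite /= ltnS ltnW.
  have E2 : nth e p i = nth d p i by apply: set_nth_default.
  by rewrite /= E1 E2.
- by right.
Qed.

Lemma edisj_mem P Q : edisj inv P Q -> forall u, (u \in P) || (inv u \in P) -> (u \in Q) || (inv u \in Q) -> False.
Proof.
move=> ed u uP uQ.
have H : forall d, d \in P -> (d \notin Q) && (inv d \notin Q) by move/allP: ed.
case/orP: uP => /H /andP [n1 n2]; case/orP: uQ => uq.
- by rewrite uq in n1.
- by rewrite uq in n2.
- by rewrite invK uq in n2.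
- by rewrite uq in n1.
Qed.

Lemma lift_visit x0 s t P x : h s t -> gpath tl inv s t P -> x \in lift s P ->
  exists v i o, [/\ x \in blk v i o, okv v i o,
    (forall u, u \in darts i o -> (u \in P) || (inv u \in P)),
    ((i == None) || (o == None) -> (v == s) || (v == t))
  & (forall a b, i = Some a -> o = Some b ->
       exists k, [/\ 0 < k, k < size P, a = inv (nth x0 P k.-1) & b = nth x0 P k])].
Proof.
move=> hst; case: P => [//|d p] /= /and4P [/eqP ts hp /eqP hl u].
have n4s := term_nsp4 hst.
have n4t : ~~ sp4 (hdd (last d p)) by rewrite hl; exact: (term_nsp4 (hsym hst)).
have u' : uniq (tl d :: hdd d :: map hdd p) by rewrite ts.
rewrite mem_cat => /orP [xb|/(liftrest_mem_ok hp u' n4t) [[i ip [xi oki]]|[xl okl]]].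
- exists s, None, (Some d); split => //.
  + by rewrite /okv /= ts eqxx (negbTE n4s).
  + by move=> w wm; rewrite /= inE in wm; rewrite (eqP wm) in_cons eqxx.
  + by move=> _; rewrite eqxx.
- exists (hdd (nth d (d :: p) i)), (Some (inv (nth d (d :: p) i))), (Some (nth d p i)); split => //.
  + move=> w wm; rewrite /= !inE in wm; case/orP: wm => /eqP ->; apply/orP.
      by right; rewrite invK; apply: mem_nth; rewrite /= ltnS ltnW.
    by left; rewrite in_cons mem_nth ?orbT.
  + move=> a b [<-] [<-]; exists i.+1; split => //.
      by rewrite /= (set_nth_default d x0) //= ltnS ltnW.
    by rewrite /= (set_nth_default d x0).
- exists (hdd (last d p)), (Some (inv (last d p))), None; split => //.
  + by move=> w wm; rewrite /= inE in wm; rewrite (eqP wm) invK mem_last orbT.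
  + by move=> _; rewrite hl eqxx orbT.
Qed.


Lemma mk_cross x0 P Q k m : edisj inv P Q -> 0 < k -> k < size P -> 0 < m -> m < size Q ->
  tl (nth x0 P k) = tl (nth x0 Q m) ->
  alternate (orbit rot (nth x0 P k)) (inv (nth x0 P k.-1)) (inv (nth x0 Q m.-1)) (nth x0 P k) (nth x0 Q m) ->
  cross tl inv rot P Q.
Proof.
move=> ed k0 kP m0 mQ te alt.
have mP1 : nth x0 P k.-1 \in P by apply: mem_nth; exact: leq_ltn_trans (leq_pred k) kP.
have mP : nth x0 P k \in P by apply: mem_nth.
have mQ1 : nth x0 Q m.-1 \in Q by apply: mem_nth; exact: leq_ltn_trans (leq_pred m) mQ.
have mQ' : nth x0 Q m \in Q by apply: mem_nth.
left; exists x0, k, k, m, m; split; first by rewrite k0 m0 kP mQ !leqnn !subnn.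
split => //; split; first by move=> kk; rewrite subnn.
split; last by rewrite subnn take0.
split; apply/negP => /eqP e.
- by apply: (edisj_mem ed (u := nth x0 P k.-1)); rewrite ?mP1 // e mQ1.
- by apply: (edisj_mem ed (u := nth x0 P k)); rewrite ?mP // e mQ'.
- by apply: (edisj_mem ed (u := nth x0 P k.-1)); rewrite ?mP1 // e invK mQ' orbT.
- by apply: (edisj_mem ed (u := nth x0 P k)); rewrite ?mP // e invK mQ1 orbT.
Qed.

Lemma h_t_neq s t s' t' : h s t -> h s' t' -> s' != s -> s' != t -> (s != t') && (t != t').
Proof.
move=> hst hst' n1 n2; case: hm => hs _ hu.
apply/andP; split; apply/eqP => e; subst t'.
- by move: n2; rewrite (hu _ _ _ hst (hsym hst')) eqxx.
- by move: n1; rewrite (hu _ _ _ (hsym hst) (hsym hst')) eqxx.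
Qed.

Lemma g_to_g2 : uncrossed_flow tl inv rot h -> node_disjoint_flow2 tl inv rot h.
Proof.
case=> F [HF HD]; exists (fun s t => lift s (F s t)); split.
  by move=> s t hst; apply: lift_npath => //; apply: HF.
move=> s t s' t' hst hst' n1 n2.
have [ed nc] := HD _ _ _ _ hst hst' n1 n2.
have /andP [n4 n5] := h_t_neq hst hst' n1 n2.
have n3 : s != s' by rewrite eq_sym.
have [ed' nc'] := HD _ _ _ _ hst' hst n3 n4.
apply/allP => x xP; apply/negP => xQ.
have [x0 _] : exists x0 : D, True.
  by case: (F s t) (HF _ _ hst) => [|d ?] //; exists d.
have [vP [iP [oP [xbP okP dP tP cP]]]] := lift_visit x0 hst (HF _ _ hst) xP.
have [vQ [iQ [oQ [xbQ okQ dQ tQ cQ]]]] := lift_visit x0 hst' (HF _ _ hst') xQ.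
have ev : vQ = vP by rewrite -(blk_proj okP xbP) (blk_proj okQ xbQ).
subst vQ.
apply: (local okP okQ _ _ _ _ _ xbP xbQ).
- rewrite cat_uniq; case/and4P: okP => _ -> _ _; case/and4P: okQ => _ -> _ _ /=.
  rewrite andbT; apply/hasPn => u uQ; apply/negP => uP.
  exact: (edisj_mem ed (dP _ uP) (dQ _ uQ)).
- by move/tP => /orP [] /eqP ->; [apply: (degH_1 hst)|apply: (degH_1 (hsym hst))].
- by move/tQ => /orP [] /eqP ->; [apply: (degH_1 hst')|apply: (degH_1 (hsym hst'))].
- apply/negP => /andP [/tP a1 /tQ a2].
  case/orP: a1 => /eqP e1; case/orP: a2 => /eqP e2; subst vP.
  + by rewrite e2 eqxx in n3.
  + by rewrite e2 eqxx in n4.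
  + by rewrite e2 eqxx in n2.
  + by rewrite e2 eqxx in n5.
- move=> aP bP aQ bQ ei eo ei' eo' _.
  have [k [k0 kP ea eb]] := cP _ _ ei eo.
  have [m [m0 mQ ea' eb']] := cQ _ _ ei' eo'.
  have tb : tl bP = tl bQ.
    subst iP oP iQ oQ; case/okv_some: okP => _ -> _; by case/okv_some: okQ => _ -> _.
  subst aP bP aQ bQ; split; apply/negP => alt.
  + by apply: nc; apply: (mk_cross ed k0 kP m0 mQ tb alt).
  + by apply: nc'; apply: (mk_cross ed' m0 mQ k0 kP (esym tb) alt).
Qed.


Lemma adj_ext_inv x y : adj2 x y -> proj x != proj y -> exists d, att d = x /\ att (inv d) = y.
Proof.
case/orP => /or4P [] /existsP [d H].
- by case/andP: H => /eqP -> /eqP ->; exists d.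
- by case/and3P: H => _ /eqP -> /eqP ->; rewrite /= tl_rot eqxx.
- by case/and3P: H => _ /eqP -> /eqP ->; rewrite /= eqxx.
- case/existsP: H => d' /and5P [_ /eqP t _ /eqP -> /eqP ->]; by rewrite /= t eqxx.
- by case/andP: H => /eqP -> /eqP -> _; exists (inv d); rewrite invK.
- by case/and3P: H => _ /eqP -> /eqP ->; rewrite /= tl_rot eqxx.
- by case/and3P: H => _ /eqP -> /eqP ->; rewrite /= eqxx.
- case/existsP: H => d' /and5P [_ /eqP t _ /eqP -> /eqP ->]; by rewrite /= t eqxx.
Qed.

Definition edart (x y : V + D) : seq D :=
  if [pick d | (att d == x) && (att (inv d) == y)] is Some d then [:: d] else [::].

Lemma edart_mem x y d : d \in edart x y -> att d = x /\ att (inv d) = y.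
Proof.
rewrite /edart; case: pickP => [d' /andP [/eqP ax /eqP ay]|//].
by rewrite inE => /eqP ->.
Qed.

Lemma edart_nil x y : proj x = proj y -> edart x y = [::].
Proof.
rewrite /edart; case: pickP => [d /andP [/eqP ax /eqP ay]|//].
move=> e; move: (tl_inv d); by rewrite -proj_att ay -e -ax proj_att eqxx.
Qed.

Lemma edart_one x y : adj2 x y -> proj x != proj y ->
  exists d, [/\ edart x y = [:: d], att d = x & att (inv d) = y].
Proof.
move=> a n; have [d [ax ay]] := adj_ext_inv a n.
rewrite /edart; case: pickP => [d' /andP [/eqP ax' /eqP ay']|/(_ d)].
  by exists d'.
by rewrite ax ay !eqxx.
Qed.

Fixpoint pd (x : V + D) (S : seq (V + D)) : seq D :=
  if S is y :: S' then edart x y ++ pd y S' else [::].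

Lemma pd_mem x S d : d \in pd x S -> att d \in x :: S /\ att (inv d) \in x :: S.
Proof.
elim: S x => [|y S IH] x //=; rewrite mem_cat => /orP [/edart_mem [-> ->]|/IH [h1 h2]].
  by rewrite !inE !eqxx orbT.
by split; rewrite in_cons ?h1 ?h2 orbT.
Qed.

Lemma pd_hd x S d : d \in pd x S -> hdd d \in map proj S.
Proof.
elim: S x => [|y S IH] x //=; rewrite mem_cat => /orP [/edart_mem [_ ay]|/IH h1].
  by rewrite in_cons -ay proj_att eqxx.
by rewrite in_cons h1 orbT.
Qed.

Lemma pd_struct x S : path adj2 x S ->
  match pd x S with
  | [::] => proj (last x S) = proj x
  | d :: p' => [/\ tl d = proj x, hpath d p' & hdd (last d p') = proj (last x S)]
  end.
Proof.
elim: S x => [|y S IH] x //= /andP [a pS].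
have := IH _ pS.
case E: (proj x == proj y).
  rewrite /= (edart_nil (eqP E)) /= -(eqP E).
  by case: (pd y S) => [|d p'] //.
have [d [-> ax ay]] := edart_one a (negbT E).
rewrite cat1s.
case: (pd y S) => [|d' p'] /=.
  by move=> ->; split => //; [rewrite -ax proj_att | rewrite -ay proj_att].
case=> t1 p1 l1; split => //; first by rewrite -ax proj_att.
by rewrite t1 -ay proj_att /hd eqxx.
Qed.

Definition contig x0 (S : seq (V + D)) := forall i j k, i < j -> j < k -> k < size S ->
  proj (nth x0 S i) = proj (nth x0 S k) -> proj (nth x0 S j) = proj (nth x0 S i).

Lemma pd_uniq x0 x S : path adj2 x S -> contig x0 (x :: S) -> uniq (proj x :: map hdd (pd x S)).
Proof.
elim: S x => [|y S IH] x //= /andP [a pS] C.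
have C' : contig x0 (y :: S).
  move=> i j k ij jk kS e; exact: (C i.+1 j.+1 k.+1).
case E: (proj x == proj y).
  by rewrite /= (edart_nil (eqP E)) /= (eqP E); apply: IH.
have [d [-> ax ay]] := edart_one a (negbT E).
have hdy : hdd d = proj y by rewrite -ay proj_att.
rewrite /= hdy; have := IH _ pS C'; rewrite /= => ->; rewrite andbT.
rewrite in_cons E /=; apply/negP => /mapP [d' /pd_hd /mapP [z zS ez] e'].
have := C 0 1 (index z S).+2 erefl erefl.
rewrite /= ltnS ltnS index_mem zS nth_index // -ez -e' => /(_ erefl erefl) ey.
by rewrite ey eqxx in E.
Qed.


Lemma att_inr d a : att d = inr a -> d = a.
Proof. by rewrite /Defs.att; case: ifP => _ // [->]. Qed.

Lemma nbr4 a y : sp4 (tl a) -> adj2 (inr a) y ->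
  [\/ y = att (inv a), y = inr (rot a) | exists2 z, y = inr z & rot z = a].
Proof.
move=> s4; have n3 := sp43 s4.
case/orP => /or4P [] /existsP [d H].
- by case/andP: H => /eqP /esym /att_inr -> /eqP ->; apply: Or31.
- by case/and3P: H => _ /eqP [->] /eqP ->; apply: Or32.
- by case/and3P: H => _ /eqP.
- case/existsP: H => d' /and5P [s3 _ _ /eqP [e] _]; by move: n3; rewrite e s3.
- case/andP: H => /eqP -> /eqP /esym /att_inr e; apply: Or31; by rewrite -e invK.
- case/and3P: H => _ /eqP -> /eqP [e]; apply: Or33; by exists d.
- case/and3P: H => s3 _ /eqP [e]; by move: n3; rewrite e s3.
- case/existsP: H => d' /and5P [s3 /eqP t _ _ /eqP [e]]; by move: n3; rewrite e t s3.
Qed.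

Lemma vert2_cases x : vert2 x ->
  (x = inl (proj x) /\ ~~ sp4 (proj x)) \/ (exists2 a, x = inr a & sp4 (proj x) || sp3 (proj x)).
Proof. by case: x => [v|a] /= H; [left|right; exists a]. Qed.

Definition induced x0 (S : seq (V + D)) := forall i j, i.+1 < j -> j < size S ->
  ~~ adj2 (nth x0 S i) (nth x0 S j).

Lemma transition (f : nat -> bool) i j : i <= j -> f i -> ~~ f j ->
  exists l, [/\ i <= l, l < j, f l & ~~ f l.+1].
Proof.
elim: j i => [|j IH] i.
  by rewrite leqn0 => /eqP -> ->.
rewrite leq_eqVlt => /orP [/eqP -> -> //|]; rewrite ltnS => ij fi nfj.
case E: (f j).
  by exists j; split.
have [l [il lj fl nfl]] := IH i ij fi (negbT E).
by exists l; split => //; rewrite ltnS ltnW.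
Qed.

Lemma npath2E s t S : npath2 tl inv rot h s t S ->
  [/\ nth (inl s) S 0 = inl s, uniq S, 0 < size S,
      forall m, m.+1 < size S -> adj2 (nth (inl s) S m) (nth (inl s) S m.+1)
    & forall m, m < size S -> vert2 (nth (inl s) S m)].
Proof.
case: S => [//|x S]; rewrite /npath2 => /and5P [/eqP -> pS _ u av]; split => //.
- by move=> m mS; move/(pathP (inl s)): pS => /(_ m mS).
- by move=> m mS; move/allP: av => av; apply: av; rewrite mem_nth.
Qed.

Lemma gadget_adj X Y v : vert2 X -> vert2 Y -> proj X = v -> proj Y = v -> X != Y ->
  ~~ sp4 v -> ~~ sp3 v -> False.
Proof.
move=> vX vY pX pY XY /negbTE n4 /negbTE n3.
case: X vX pX XY => [x|a] /= vX pX; case: Y vY pY => [y|b] /= vY pY; subst.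
- by rewrite inlE eqxx.
- by rewrite n4 n3 in vY.
- by rewrite n4 n3 in vX.
- by rewrite n4 n3 in vX.
Qed.

Lemma gadget_adj3 X Y v : vert2 X -> vert2 Y -> proj X = v -> proj Y = v -> X != Y ->
  sp3 v -> adj2 X Y.
Proof.
move=> vX vY pX pY XY s3.
case: X vX pX XY => [x|a] /= vX pX; case: Y vY pY => [y|b] /= vY pY; subst.
- by rewrite inlE eqxx.
- by move=> _; apply: adj_sp3l.
- by move=> _; rewrite adjC; apply: adj_sp3l.
- by rewrite inrE => ab; apply: adj_sp3.
Qed.

Lemma gadget4 X v : vert2 X -> proj X = v -> sp4 v -> exists2 a, X = inr a & tl a = v.
Proof. by case: X => [x|a] /= vX <-; [rewrite (negbTE vX)|exists a]. Qed.

Lemma induced_contig s t S : npath2 tl inv rot h s t S -> induced (inl s) S -> contig (inl s) S.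
Proof.
move=> NP ind i j k ij jk kS e; apply/eqP; apply: contraTT isT => ne.
have [S0 u S0' adj vt] := npath2E NP.
pose v := proj (nth (inl s) S i).
have [l [il lj fl nfl]] := transition (f := fun l => proj (nth (inl s) S l) == v) (ltnW ij) (eqxx _) ne.
set X := nth (inl s) S l in fl; set Y := nth (inl s) S k.
have lk : l.+1 < k by apply: leq_ltn_trans jk.
have lS : l < size S by apply: ltn_trans kS; apply: ltn_trans lk.
have XY : X != Y by rewrite /X /Y nth_uniq // neq_ltn (ltn_trans _ lk).
have pY : proj Y = v by rewrite /Y -e.
have pX : proj X = v by apply/eqP.
have nadj : ~~ adj2 X Y by apply: ind.
have vX : vert2 X := vt l lS; have vY : vert2 Y := vt k kS.
case s4: (sp4 v); last case s3: (sp3 v).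
- have [a eX ta] := gadget4 vX pX s4.
  have [b eY tb'] := gadget4 vY pY s4.
  have tb : tl b = tl a by rewrite ta tb'.
  move: nadj XY; rewrite eX eY inrE => nadj ab.
  rewrite -ta in s4.
  have nad : ~~ ((b == rot a) || (a == rot b)).
    apply/negP => /orP [] /eqP ebb; move: nadj.
      by rewrite ebb adj_rot.
    by rewrite ebb adjC adj_rot // tb.
  have eb : b = r2 a by apply: route_r2.
  have l0 : 0 < l.
    case: (posnP l) => // l0'; by move: eX; rewrite /X l0' S0 => /eqP.
  have a1 : adj2 (inr a) (nth (inl s) S l.+1) by rewrite -eX; apply: (adj l); exact: leq_ltn_trans (ltnW lk) kS.
  have a0 : adj2 (inr a) (nth (inl s) S l.-1).
    have := adj l.-1; rewrite prednK // => /(_ lS) H; by rewrite adjC -eX.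
  have e1 : nth (inl s) S l.+1 = att (inv a).
    move: nfl; case: (nbr4 s4 a1) => [->//|->|[z -> rz]] /=.
      by rewrite tl_rot ta eqxx.
      by rewrite -(tl_rot z) rz ta eqxx.
  case: (nbr4 s4 a0) => [e0|e0|[z e0 rz]].
  + have : nth (inl s) S l.-1 == nth (inl s) S l.+1 by rewrite e0 e1.
    have h1 : l.-1 < size S := leq_ltn_trans (leq_pred l) lS.
    have h2 : l.+1 < size S := leq_ltn_trans (ltnW lk) kS.
    rewrite nth_uniq //; case: (l) l0 => [//|n] _ /=.
    by rewrite (ltn_eqF (leqW (ltnSn n))).
  + have := ind l.-1 k; rewrite prednK // => /(_ (ltn_trans (ltnSn l) lk) kS).
    by rewrite e0 -/Y eY eb adj_rot // tl_rot.
  + have := ind l.-1 k; rewrite prednK // => /(_ (ltn_trans (ltnSn l) lk) kS).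
    have ez : z = r3 a by apply: rot_inj; rewrite rz rot4 // sp4_deg.
    by rewrite e0 -/Y eY eb ez adjC adj_rot // /r2 !tl_rot.
- by move: nadj; rewrite (gadget_adj3 vX vY pX pY XY s3).
- by case: (gadget_adj vX vY pX pY XY (negbT s4) (negbT s3)).
Qed.


Lemma npath2F s t S : npath2 tl inv rot h s t S ->
  [/\ S != [::], head (inl s) S = inl s, sorted adj2 S, last (inl s) S = inl t & uniq S /\ all vert2 S].
Proof. by case: S => [//|x S]; rewrite /npath2 => /and5P [/eqP -> pS /eqP l u av]. Qed.

Lemma induce s t S : npath2 tl inv rot h s t S ->
  exists S', [/\ npath2 tl inv rot h s t S', {subset S' <= S} & induced (inl s) S'].
Proof.
move: {2}(size S) (leqnn (size S)) => n; elim: n S => [|n IH] S Sn NP.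
  by move: Sn NP; rewrite leqn0 size_eq0 => /eqP ->.
have [ind|nind] := boolP [forall i : 'I_(size S), forall j : 'I_(size S),
   (i.+1 < j) ==> ~~ adj2 (nth (inl s) S i) (nth (inl s) S j)].
  exists S; split => // i j ij jS.
  have iS : i < size S by apply: ltn_trans jS; apply: ltn_trans ij.
  by move/forallP: ind => /(_ (Ordinal iS)) /forallP /(_ (Ordinal jS)) /implyP; apply.
move/forallPn: nind => [[i iS] /forallPn [[j jS]]]; rewrite /= negb_imply negbK => /andP [ij aij].
have [Sne Sh Ss Sl [Su Sv]] := npath2F NP.
have i1S : i.+1 < size S by apply: ltn_trans jS.
set S' := take i.+1 S ++ drop j S.
have sub : subseq S' S.
  rewrite /S' -{3}(cat_take_drop i.+1 S); apply: cat_subseq => //.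
  rewrite (_ : drop j S = drop (j - i.+1) (drop i.+1 S)); first exact: drop_subseq.
  by rewrite drop_drop subnK // ltnW.
have msub : {subset S' <= S} by apply: mem_subseq.
have sz : size S' <= n.
  move: Sn; rewrite /S' size_cat size_take size_drop i1S; lia.
have tne : take i.+1 S != [::] by rewrite -size_eq0 size_take i1S.
have dne : drop j S != [::] by rewrite -size_eq0 size_drop subn_eq0 -ltnNge.
have NP' : npath2 tl inv rot h s t S'.
  apply: npath2I.
  - by rewrite /S' -size_eq0 size_cat addn_eq0 size_eq0 (negbTE tne).
  - have hS : head (inl s) (take i.+1 S) = head (inl s) S.
      by rewrite -{2}(cat_take_drop i.+1 S) head_catn.
    by rewrite /S' head_catn // hS.
  - apply: (sorted_catI (x := inl s)).
    + exact: take_sorted.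
    + by have := @cat_sorted2 _ adj2 (take j S) (drop j S); rewrite cat_take_drop => /(_ Ss) [].
    + move=> _ _; rewrite (take_nth (inl s) iS) last_rcons (drop_nth (inl s) jS) /=.
      exact: aij.
  - rewrite /S' last_catn // -Sl -{2}(cat_take_drop j S) last_catn //.
  - exact: subseq_uniq Su.
  - by apply/allP => x /msub xS; move/allP: Sv; apply.
have [S'' [NP'' sub'' ind'']] := IH S' sz NP'.
by exists S''; split => // x /sub''/msub.
Qed.


Lemma nbr_in_path s t S a : npath2 tl inv rot h s t S -> inr a \in S -> sp4 (tl a) ->
  (inr (rot a) \in S) \/ (exists2 z, inr z \in S & rot z = a).
Proof.
move=> NP aS s4.
have [S0 u S0' adj vt] := npath2E NP.
have [_ _ _ Sl _] := npath2F NP.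
set l := index (inr a) S.
have lS : l < size S by rewrite index_mem.
have el : nth (inl s) S l = inr a by apply: nth_index.
have l0 : 0 < l by case: (posnP l) => // l0'; move: el; rewrite l0' S0.
have l1 : l.+1 < size S.
  rewrite ltn_neqAle lS andbT; apply/eqP => e.
  have : nth (inl s) S (size S).-1 = inl t by rewrite nth_last.
  by rewrite -e /= el.
have a1 : adj2 (inr a) (nth (inl s) S l.+1) by rewrite -el; apply: adj.
have a0 : adj2 (inr a) (nth (inl s) S l.-1).
  by have := adj l.-1; rewrite prednK // => /(_ lS) H; rewrite adjC -el.
have m0 : nth (inl s) S l.-1 \in S by apply: mem_nth; exact: leq_ltn_trans (leq_pred l) lS.
have m1 : nth (inl s) S l.+1 \in S by apply: mem_nth.
case: (nbr4 s4 a0) => [e0|e0|[z e0 rz]]; last by right; exists z; rewrite -?e0.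
- case: (nbr4 s4 a1) => [e1|e1|[z e1 rz]]; last by right; exists z; rewrite -?e1.
  + have : nth (inl s) S l.-1 == nth (inl s) S l.+1 by rewrite e0 e1.
    have h1 : l.-1 < size S := leq_ltn_trans (leq_pred l) lS.
    rewrite nth_uniq //; case: (l) l0 => [//|n] _ /=.
    by rewrite (ltn_eqF (leqW (ltnSn n))).
  + by left; rewrite -e1.
- by left; rewrite -e0.
Qed.

Lemma four_cover (L : seq D) x1 y1 x2 y2 : uniq [:: x1; y1; x2; y2] -> uniq L -> size L = 4 ->
  all (fun w => w \in L) [:: x1; y1; x2; y2] -> forall w, w \in L -> w \in [:: x1; y1; x2; y2].
Proof.
move=> u uL sL al w wL.
have sub : {subset [:: x1; y1; x2; y2] <= L} by move=> z zm; move/allP: al; apply.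
have [_ E] := uniq_min_size u sub (eq_leq sL).
by rewrite E.
Qed.

Lemma nocross s t P2 (Q2 : seq (V + D)) p q : npath2 tl inv rot h s t P2 ->
  (forall d, d \in p -> att d \in P2) ->
  (forall d, d \in q -> att d \in Q2 /\ att (inv d) \in Q2) ->
  (forall x, x \in P2 -> x \in Q2 -> False) ->
  edisj inv p q -> ~ crossing_dir tl inv rot p q.
Proof.
move=> NP Hp Hq dis ed [x0 [i [j [a [b [[/andP [i0 ij] jp /andP [a0 ab] bq eq] [te [same [_ alt]]]]]]]]].
have iP : i < size p by apply: leq_ltn_trans jp.
have aQ : a < size q by apply: leq_ltn_trans bq.
have ej : j = i.
  apply/eqP; rewrite eqn_leq ij andbT leqNgt; apply/negP => lt.
  have := same 0; rewrite subn_gt0 lt !addn0 => /(_ isT) e.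
  apply: (edisj_mem ed (u := nth x0 p i)); first by rewrite mem_nth.
  by rewrite e mem_nth.
subst j; have eb : b = a by apply/eqP; rewrite eqn_leq ab andbT -subn_eq0 -eq subnn.
subst b; move: alt; rewrite subnn take0 /=.
set x1 := inv (nth x0 p i.-1); set y1 := inv (nth x0 q a.-1).
set x2 := nth x0 p i; set y2 := nth x0 q a => alt.
have /and3P [u al _] := alt.
have al' : all (fun e => tl e == tl x2) [:: x1; y1; x2; y2].
  by apply/allP => e em; move/allP: al => /(_ e em); rewrite orbit_tl.
have d4 : 4 <= dG (tl x2) by apply: (degG_uniq u al').
have H4 : dG (tl x2) = 4 by apply/eqP; rewrite eqn_leq deg4 d4.
have H0 : degH h (tl x2) = 0.
  have := degH_le1 (tl x2); case E: (degH h (tl x2)) => [//|[|//]] _.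
  by have := hdeg E; rewrite H4.
have s4 : sp4 (tl x2) by rewrite /special4 H0 H4 !eqxx.
have ex1 : x1 = r2 x2 by apply/eqP; rewrite -(alt4 (y1 := y1) (y2 := y2)) //.
have x2P : inr x2 \in P2 by rewrite -att_sp ?sp_or4 //; apply: Hp; rewrite mem_nth.
have y1Q : inr y1 \in Q2.
  have m : nth x0 q a.-1 \in q by apply: mem_nth; exact: leq_ltn_trans (leq_pred a) aQ.
  have ty : tl y1 = tl x2 by move/allP: al' => /(_ y1); rewrite !inE eqxx orbT => /(_ isT) /eqP.
  by rewrite -att_sp ?ty ?sp_or4 //; case: (Hq _ m).
have y2Q : inr y2 \in Q2.
  have m : nth x0 q a \in q by apply: mem_nth.
  have ty : tl y2 = tl x2 by move/allP: al' => /(_ y2); rewrite !inE eqxx !orbT => /(_ isT) /eqP.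
  by rewrite -att_sp ?ty ?sp_or4 //; case: (Hq _ m).
have al4 : all (fun w => w \in [:: x2; rot x2; r2 x2; r3 x2]) [:: x1; y1; x2; y2] by rewrite -orbit4.
have cov := four_cover u (uniq4 H4) (erefl _) al4.
have U4 := uniq4 H4.
move: U4; rewrite /= !inE !negb_or => /and4P [/and3P [n1 n2 n3] /andP [n4 n5] n6 _].
have key : forall w, w \in [:: rot x2; r3 x2] -> (w == y1) || (w == y2).
  move=> w wm; have : w \in [:: x2; rot x2; r2 x2; r3 x2] by move: wm; rewrite !inE => /orP [] ->; rewrite ?orbT.
  move/cov; rewrite !inE ex1; move: wm; rewrite !inE => /orP [] /eqP ->.
    by rewrite (negbTE n4) (eq_sym (rot x2) x2) (negbTE n1) /=.
  by rewrite (eq_sym (r3 x2) (r2 x2)) (negbTE n6) (eq_sym (r3 x2) x2) (negbTE n3) /=.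
case: (nbr_in_path NP x2P s4) => [wP|[z zP rz]].
- by case/orP: (key (rot x2) (mem_head _ _)) => /eqP e; apply: (dis _ wP); rewrite e.
- have ez : z = r3 x2 by apply: rot_inj; rewrite rz rot4.
  have r3m : r3 x2 \in [:: rot x2; r3 x2] by rewrite !inE eqxx orbT.
  by case/orP: (key (r3 x2) r3m) => /eqP e; apply: (dis _ zP); rewrite ez e.
Qed.


Definition pdS (S : seq (V + D)) : seq D := if S is x :: S' then pd x S' else [::].

Lemma pdS_mem S d : d \in pdS S -> att d \in S /\ att (inv d) \in S.
Proof. by case: S => [//|x S] /pd_mem. Qed.

Lemma pdS_gpath s t S : h s t -> npath2 tl inv rot h s t S -> induced (inl s) S ->
  gpath tl inv s t (pdS S).
Proof.
move=> hst NP ind.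
have C := induced_contig NP ind.
case: S NP C {ind} => [//|x S] NP C; have NP' := NP.
move: NP'; rewrite /npath2 => /and5P [/eqP ex pS /eqP l _ _].
have := pd_struct pS; have := pd_uniq pS C; rewrite /= ex.
case: (pd (inl s) S) => [|d p'] /=.
  by move=> _; rewrite -ex l /= => e; move: (hneq hst); rewrite e eqxx.
move=> u [-> hp hl]; by rewrite eqxx hp hl -ex l eqxx.
Qed.

Lemma g2_to_g : node_disjoint_flow2 tl inv rot h -> uncrossed_flow tl inv rot h.
Proof.
case=> F2 [HF HD].
have ex : forall s t, exists S, h s t ->
    [/\ npath2 tl inv rot h s t S, {subset S <= F2 s t} & induced (inl s) S].
  move=> s t; case hst: (h s t); last by exists [::].
  have [S' [N1 N2 N3]] := induce (HF _ _ hst); by exists S'.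
pose G s t := proj1_sig (constructive_indefinite_description _ (ex s t)).
have HG : forall s t, h s t ->
    [/\ npath2 tl inv rot h s t (G s t), {subset G s t <= F2 s t} & induced (inl s) (G s t)].
  by move=> s t; exact: (proj2_sig (constructive_indefinite_description _ (ex s t))).
exists (fun s t => pdS (G s t)); split.
  by move=> s t hst; have [N1 _ N3] := HG s t hst; apply: pdS_gpath.
move=> s t s' t' hst hst' n1 n2.
have [NP sub _] := HG s t hst; have [NQ subQ _] := HG s' t' hst'.
have dis : forall x, x \in G s t -> x \in G s' t' -> False.
  move=> x /sub xP /subQ xQ; move/allP: (HD _ _ _ _ hst hst' n1 n2) => /(_ x xP).
  by rewrite xQ.
have ed : edisj inv (pdS (G s t)) (pdS (G s' t')).
  apply/allP => d /pdS_mem [dP _]; apply/andP; split; apply/negP => /pdS_mem [dQ dQ'].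
    exact: dis dP dQ.
  by rewrite invK in dQ'; exact: dis dP dQ'.
split => // [[c|c]].
- apply: (nocross NP _ _ dis ed c).
    by move=> d /pdS_mem [].
  by move=> d /pdS_mem.
- apply: (nocross NP _ _ dis _ c).
  + by move=> d /pdS_mem [].
  + move=> d; rewrite /revp mem_rev => /mapP [e eq ->].
    by have [a1 a2] := pdS_mem eq; rewrite invK.
  + apply/allP => d dP; move/allP: ed => /(_ d dP) /andP [m1 m2].
    by rewrite /revp !mem_rev -{1}(invK d) !(mem_map (@perm_inj _ inv)) m1 m2.
Qed.

End Proof5.

Theorem lemma5p3 (V D : finType) (tl : D -> V) (inv rot : {perm D})
  (h : rel V) :
  rotation_system tl inv rot ->
  planar_emb tl inv rot ->
  (forall v, degG tl v <= 4) ->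
  matching h ->
  (forall v, degH h v = 1 -> degG tl v <= 3) ->
  (uncrossed_flow tl inv rot h <-> node_disjoint_flow2 tl inv rot h).
Proof.
move=> rs _ d4 hm hd; split.
  exact: g_to_g2.
exact: g2_to_g.
Qed.
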